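(* Let $A$ and $B$ be self-adjoint operators on the same complex Hilbert space, and suppose that $B$ is bounded and non-negative. If $\sigma(A + tB) = \sigma(A)$ for all $t \in \mathbb{R}$, then $B = 0$ or $\sigma(A) = \mathbb{R}$.
   Context: $\sigma(T)$ denotes the spectrum of an operator $T$. $A$ may be unbounded; $A+tB$ is defined on the domain of $A$. *)

(* Defs.v *)
From HB Require Import structures.
From mathcomp Require Import all_boot all_order all_algebra.
From mathcomp Require Import reals complex.
Set Implicit Arguments. Unset Strict Implicit. Unset Printing Implicit Defensive.
Import Order.TTheory GRing.Theory Num.Theory.
Local Open Scope ring_scope.

Section Hilbert.
Variables (R : realType) (H : lmodType R[i]) (ip : H -> H -> R[i]).

Definition is_inner_product : Prop :=
  [/\ (forall (a : R[i]) (x y z : H), ip (a *: x + y) z = a * ip x z + ip y z),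
      (forall x y : H, ip y x = Num.conj (ip x y)),
      (forall x : H, 0 <= ip x x) &
      (forall x : H, ip x x = 0 -> x = 0)].

Definition hnorm (x : H) : R[i] := sqrtC (ip x x).

Definition is_complete : Prop :=
  forall u : nat -> H,
    (forall e : R[i], 0 < e -> exists N : nat, forall m n : nat,
        (N <= m)%N -> (N <= n)%N -> hnorm (u m - u n) < e) ->
    exists l : H, forall e : R[i], 0 < e -> exists N : nat, forall n : nat,
        (N <= n)%N -> hnorm (u n - l) < e.

Definition is_hilbert : Prop := is_inner_product /\ is_complete.

Definition linear_on (D : H -> Prop) (T : H -> H) : Prop :=
  [/\ D 0,
      (forall (a : R[i]) (x y : H), D x -> D y -> D (a *: x + y)) &
      (forall (a : R[i]) (x y : H), D x -> D y -> T (a *: x + y) = a *: T x + T y)].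

Definition dense (D : H -> Prop) : Prop :=
  forall (x : H) (e : R[i]), 0 < e -> exists y : H, D y /\ hnorm (x - y) < e.

(* self-adjoint: densely defined, D(T^* ) = D(T) and T^* = T on it, where
   D(T^* ) = { y | exists z, forall x in D(T), <T x, y> = <x, z> } and T^* y = z *)
Definition self_adjoint (D : H -> Prop) (T : H -> H) : Prop :=
  [/\ linear_on D T, dense D,
      (forall y : H, D y <-> exists z : H, forall x : H, D x -> ip (T x) y = ip x z) &
      (forall x y : H, D x -> D y -> ip (T x) y = ip x (T y))].

Definition bounded (T : H -> H) : Prop :=
  exists M : R[i], forall x : H, hnorm (T x) <= M * hnorm x.

Definition nonneg_op (T : H -> H) : Prop := forall x : H, 0 <= ip (T x) x.

Definition in_resolvent (D : H -> Prop) (T : H -> H) (l : R[i]) : Prop :=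
  exists S : H -> H,
    [/\ (forall y : H, D (S y) /\ T (S y) - l *: S y = y),
        (forall x : H, D x -> S (T x - l *: x) = x) &
        bounded S].

Definition in_spectrum (D : H -> Prop) (T : H -> H) (l : R[i]) : Prop :=
  ~ in_resolvent D T l.

End Hilbert.

(* Main.v *)
Require Import Defs.
From HB Require Import structures.
From mathcomp Require Import all_boot all_order all_algebra.
From mathcomp Require Import boolp classical_sets reals complex.
From mathcomp Require Import ring lra.
Set Implicit Arguments. Unset Strict Implicit. Unset Printing Implicit Defensive.
Import Order.TTheory GRing.Theory Num.Theory.
Local Open Scope ring_scope.

Local Notation re := complex.Re.
Local Notation im := complex.Im.

Section Cplx.
Variable R : realType.
Implicit Types x y : R[i].
Lemma reM x y : re (x * y) = re x * re y - im x * im y.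
Proof. by case: x y => a b [c d]. Qed.
Lemma imM x y : im (x * y) = re x * im y + im x * re y.
Proof. by case: x y => a b [c d]. Qed.
Lemma reD x y : re (x + y) = re x + re y. Proof. by case: x y => a b [c d]. Qed.
Lemma imD x y : im (x + y) = im x + im y. Proof. by case: x y => a b [c d]. Qed.
Lemma reN x : re (- x) = - re x. Proof. by case: x. Qed.
Lemma imN x : im (- x) = - im x. Proof. by case: x. Qed.
Lemma reB x y : re (x - y) = re x - re y. Proof. by rewrite reD reN. Qed.
Lemma imB x y : im (x - y) = im x - im y. Proof. by rewrite imD imN. Qed.
Lemma reJ x : re (Num.conj x) = re x. Proof. by case: x. Qed.
Lemma imJ x : im (Num.conj x) = - im x. Proof. by case: x. Qed.
Lemma reC (r : R) : re (r%:C)%C = r. Proof. by []. Qed.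
Lemma imC (r : R) : im (r%:C)%C = 0. Proof. by []. Qed.
Lemma re0 : re (0 : R[i]) = 0. Proof. by []. Qed.
Lemma im0 : im (0 : R[i]) = 0. Proof. by []. Qed.
Lemma re1 : re (1 : R[i]) = 1. Proof. by []. Qed.
Lemma im1 : im (1 : R[i]) = 0. Proof. by []. Qed.
Lemma reI : re ('i%C : R[i]) = 0. Proof. by []. Qed.
Lemma imI : im ('i%C : R[i]) = 1. Proof. by []. Qed.
Lemma complex_ext x y : re x = re y -> im x = im y -> x = y.
Proof. by case: x y => a b [c d] /= -> ->. Qed.
Lemma ge0C x : 0 <= x -> x = (re x)%:C%C.
Proof. move=> h; apply: complex_ext => //=; exact: ger0_Im. Qed.
Lemma ge0_re x : 0 <= x -> 0 <= re x.
Proof. by rewrite lecE => /andP[]. Qed.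
Lemma sqrtC_C (r : R) : 0 <= r -> sqrtC (r%:C%C) = (Num.sqrt r)%:C%C.
Proof.
move=> hr.
have h : (r%:C%C : R[i]) = ((Num.sqrt r)%:C%C) ^+ 2.
  by rewrite -rmorphXn /= sqr_sqrtr.
rewrite h sqrCK // lecR; exact: sqrtr_ge0.
Qed.
End Cplx.

Section IP.
Variables (R : realType) (H : lmodType R[i]) (ip : H -> H -> R[i]).
Hypothesis hip : is_inner_product ip.

Definition n2 (x : H) : R := re (ip x x).

Lemma ipDZl a x y z : ip (a *: x + y) z = a * ip x z + ip y z.
Proof. by case: hip. Qed.
Lemma ipC x y : ip y x = Num.conj (ip x y).
Proof. by case: hip. Qed.
Lemma ip0l z : ip 0 z = 0.
Proof.
have := ipDZl 1 0 0 z; rewrite scaler0 addr0 mul1r.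
by rewrite -{1}[ip 0 z]addr0 => /addrI ->.
Qed.
Lemma ipDl x y z : ip (x + y) z = ip x z + ip y z.
Proof. by rewrite -[x]scale1r ipDZl mul1r scale1r. Qed.
Lemma ipZl a x z : ip (a *: x) z = a * ip x z.
Proof. by rewrite -[a *: x]addr0 ipDZl ip0l addr0. Qed.
Lemma ipNl x z : ip (- x) z = - ip x z.
Proof. by rewrite -scaleN1r ipZl mulN1r. Qed.
Lemma ipBl x y z : ip (x - y) z = ip x z - ip y z.
Proof. by rewrite ipDl ipNl. Qed.
Lemma ipDr x y z : ip z (x + y) = ip z x + ip z y.
Proof. by rewrite ipC ipDl rmorphD /= -!ipC. Qed.
Lemma ipZr a x z : ip z (a *: x) = Num.conj a * ip z x.
Proof. by rewrite ipC ipZl rmorphM /= -ipC. Qed.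
Lemma ip0r z : ip z 0 = 0.
Proof. by rewrite ipC ip0l rmorph0. Qed.
Lemma ipNr x z : ip z (- x) = - ip z x.
Proof. by rewrite ipC ipNl rmorphN /= -ipC. Qed.
Lemma ipBr x y z : ip z (x - y) = ip z x - ip z y.
Proof. by rewrite ipDr ipNr. Qed.

Lemma re_ipC x y : re (ip y x) = re (ip x y).
Proof. by rewrite ipC reJ. Qed.
Lemma im_ipC x y : im (ip y x) = - im (ip x y).
Proof. by rewrite ipC imJ. Qed.

Lemma ipxx_ge0 x : 0 <= ip x x. Proof. by case: hip. Qed.
Lemma ipxx x : ip x x = (n2 x)%:C%C.
Proof. exact: ge0C (ipxx_ge0 x). Qed.
Lemma n2_ge0 x : 0 <= n2 x.
Proof. exact: ge0_re (ipxx_ge0 x). Qed.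
Lemma n2_eq0 x : n2 x = 0 -> x = 0.
Proof. move=> h; case: hip => _ _ _; apply; by rewrite ipxx h. Qed.
Lemma n20 : n2 0 = 0.
Proof. by rewrite /n2 ip0l. Qed.

Lemma n2D x y : n2 (x + y) = n2 x + n2 y + 2 * re (ip x y).
Proof. rewrite /n2 ipDl !ipDr !reD (re_ipC x y); lra. Qed.
Lemma n2B x y : n2 (x - y) = n2 x + n2 y - 2 * re (ip x y).
Proof. rewrite /n2 ipBl !ipBr !reB ?reD ?reN (re_ipC x y); lra. Qed.
Lemma re_ipZl a x y : re (ip (a *: x) y) = re a * re (ip x y) - im a * im (ip x y).
Proof. by rewrite ipZl reM. Qed.
Lemma im_ipZl a x y : im (ip (a *: x) y) = re a * im (ip x y) + im a * re (ip x y).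
Proof. by rewrite ipZl imM. Qed.
Lemma re_ipZr a x y : re (ip x (a *: y)) = re a * re (ip x y) + im a * im (ip x y).
Proof. rewrite ipZr reM reJ imJ; lra. Qed.
Lemma im_ipZr a x y : im (ip x (a *: y)) = re a * im (ip x y) - im a * re (ip x y).
Proof. rewrite ipZr imM reJ imJ; lra. Qed.
Lemma n2Z a x : n2 (a *: x) = (re a ^+ 2 + im a ^+ 2) * n2 x.
Proof.
rewrite /n2 re_ipZl re_ipZr im_ipZr.
have -> : im (ip x x) = 0 by rewrite ipxx.
rewrite /n2; lra.
Qed.
Lemma n2N x : n2 (- x) = n2 x.
Proof. by rewrite /n2 ipNl ipNr opprK. Qed.
Lemma n2Cr (r : R) x : n2 (r%:C%C *: x) = r ^+ 2 * n2 x.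
Proof. rewrite n2Z /=; lra. Qed.

Lemma re_ip_amgm x y (e : R) : 0 < e -> 2 * re (ip x y) <= e * n2 x + n2 y / e.
Proof.
move=> he.
have := n2_ge0 ((e%:C)%C *: x - y).
rewrite n2B n2Cr re_ipZl /= mul0r subr0.
move=> h.
have h2 : 0 <= e * (e * n2 x + n2 y / e - 2 * re (ip x y)).
  have E : e * (n2 y / e) = n2 y by rewrite mulrC divfK // gt_eqF.
  rewrite !mulrDr mulrN E; rewrite expr2 in h; lra.
rewrite -subr_ge0; move: h2; rewrite pmulr_rge0 //.
Qed.

Lemma re_ip_CS x y : re (ip x y) ^+ 2 <= n2 x * n2 y.
Proof.
have hx := n2_ge0 x; have hy := n2_ge0 y.
set c := re (ip x y).
have key : forall s : R, 0 <= n2 x - 2 * s * c + s ^+ 2 * n2 y.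
  move=> s; have := n2_ge0 (x - (s%:C)%C *: y).
  by rewrite n2B n2Cr re_ipZr /= mul0r addr0; lra.
have [hy0|hy0] := eqVneq (n2 y) 0.
  rewrite hy0 mulr0.
  have [c0|cn0] := eqVneq c 0; first by rewrite c0 expr0n.
  have := key ((n2 x + 1) / (2 * c)).
  have -> : 2 * ((n2 x + 1) / (2 * c)) * c = n2 x + 1 by field; rewrite cn0.
  rewrite hy0 mulr0 addr0; lra.
have hyp : 0 < n2 y by rewrite lt0r hy0.
have := key (c / n2 y).
have -> : 2 * (c / n2 y) * c = 2 * (c ^+ 2 / n2 y) by field.
have -> : (c / n2 y) ^+ 2 * n2 y = c ^+ 2 / n2 y by field.
move=> h.
have h2 : 0 <= n2 y * (n2 x - c ^+ 2 / n2 y) by rewrite mulr_ge0 //; lra.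
have E : n2 y * (n2 x - c ^+ 2 / n2 y) = n2 x * n2 y - c ^+ 2 by field.
lra.
Qed.

Lemma im_ip_re x y : im (ip x y) = re (ip x ('i%C *: y)).
Proof. rewrite re_ipZr /=; lra. Qed.
Lemma n2I y : n2 ('i%C *: y) = n2 y.
Proof. rewrite n2Z /=; lra. Qed.
Lemma im_ip_CS x y : im (ip x y) ^+ 2 <= n2 x * n2 y.
Proof. by rewrite im_ip_re -(n2I y) re_ip_CS. Qed.

End IP.

Section Conv.
Variables (R : realType) (H : lmodType R[i]) (ip : H -> H -> R[i]).
Hypothesis hip : is_inner_product ip.
Local Notation n2 := (n2 ip).

Lemma hnormE x : hnorm ip x = (Num.sqrt (n2 x))%:C%C.
Proof. by rewrite /hnorm (ipxx hip) sqrtC_C // (n2_ge0 hip). Qed.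

Lemma posC (e : R[i]) : 0 < e -> e = (re e)%:C%C /\ 0 < re e.
Proof.
rewrite ltcE /= => /andP[/eqP h1 h2]; split => //.
by apply: complex_ext.
Qed.

Lemma lt_hnorm x (r : R) : 0 < r -> (hnorm ip x < r%:C%C) <-> n2 x < r ^+ 2.
Proof.
move=> hr; rewrite hnormE ltcR.
have -> : r = Num.sqrt (r ^+ 2) by rewrite sqrtr_sqr gtr0_norm.
rewrite ltr_sqrt ?exprn_gt0 // sqrtr_sqr gtr0_norm //.
Qed.

Lemma le_hnorm x (r : R) : 0 <= r -> (hnorm ip x <= r%:C%C) <-> n2 x <= r ^+ 2.
Proof.
move=> hr; rewrite hnormE lecR.
have -> : r = Num.sqrt (r ^+ 2) by rewrite sqrtr_sqr ger0_norm.
rewrite ler_sqrt ?exprn_ge0 // sqrtr_sqr ger0_norm //.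
Qed.

Lemma complete2 (hc : is_complete ip) (u : nat -> H) :
  (forall eps : R, 0 < eps -> exists N, forall m n, (N <= m)%N -> (N <= n)%N -> n2 (u m - u n) < eps) ->
  exists l, forall eps : R, 0 < eps -> exists N, forall n, (N <= n)%N -> n2 (u n - l) < eps.
Proof.
move=> hu.
have [l hl] : exists l : H, forall e : R[i], 0 < e -> exists N : nat, forall n : nat,
        (N <= n)%N -> hnorm ip (u n - l) < e.
  apply: hc => e /posC [-> he].
  have [N hN] := hu _ (exprn_gt0 2 he).
  exists N => m n hm hn; apply/lt_hnorm => //; exact: hN.
exists l => eps heps.
have hs : 0 < Num.sqrt eps by rewrite sqrtr_gt0.
have hsC : 0 < (Num.sqrt eps)%:C%C by rewrite ltcR.
have [N hN] := hl _ hsC.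
exists N => n hn; have := hN n hn; rewrite lt_hnorm // sqr_sqrtr // ltW //.
Qed.

Lemma dense2 (D : H -> Prop) : dense ip D ->
  forall x (eps : R), 0 < eps -> exists y, D y /\ n2 (x - y) < eps.
Proof.
move=> hd x eps heps.
have hs : 0 < Num.sqrt eps by rewrite sqrtr_gt0.
have hsC : 0 < (Num.sqrt eps)%:C%C by rewrite ltcR.
have [y [hy1 hy2]] := hd x _ hsC.
exists y; split => //; move: hy2; rewrite lt_hnorm // sqr_sqrtr // ltW //.
Qed.

Lemma bounded2 (S : H -> H) : bounded ip S -> exists K : R, 0 <= K /\ forall x, n2 (S x) <= K * n2 x.
Proof.
case=> M hM.
have [[x0 hx0]|allz] := EM (exists x, n2 x <> 0); last first.
  have {}allz : forall x, n2 x = 0.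
    by move=> x; apply: contrapT => hx; apply: allz; exists x.
  by exists 0; split => // x; rewrite !allz mul0r.
have hx0p : 0 < n2 x0 by rewrite lt0r (n2_ge0 hip) andbT; apply/eqP.
have hs0 : 0 < Num.sqrt (n2 x0) by rewrite sqrtr_gt0.
have hMr : M = (re M)%:C%C.
  have := hM x0; rewrite -subr_ge0 => /ger0_Im.
  rewrite imB !hnormE imM /= mulr0 add0r subr0 => /eqP.
  rewrite mulf_eq0 (gt_eqF hs0) orbF => /eqP him.
  by apply: complex_ext.
exists (re M ^+ 2); split; first exact: sqr_ge0.
move=> x; have := hM x; rewrite hMr !hnormE -rmorphM /= lecR => h.
have h0 := sqrtr_ge0 (n2 (S x)).
have h1 : 0 <= re M * Num.sqrt (n2 x) by apply: le_trans h.
have h2 : Num.sqrt (n2 (S x)) ^+ 2 <= (re M * Num.sqrt (n2 x)) ^+ 2 by nra.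
by move: h2; rewrite exprMn !sqr_sqrtr // (n2_ge0 hip).
Qed.

Lemma bounded_of (S : H -> H) (K : R) : 0 <= K -> (forall x, n2 (S x) <= K * n2 x) -> bounded ip S.
Proof.
move=> hK h; exists (Num.sqrt K)%:C%C => x.
rewrite !hnormE -rmorphM /= lecR -sqrtrM // ler_sqrt //.
by rewrite mulr_ge0 // (n2_ge0 hip).
Qed.

End Conv.

Lemma small_mul (R : realType) (a c : R) : 0 <= a -> 0 <= c -> a * (c / (a + 1)) <= c.
Proof.
move=> ha hc.
have h1 : 0 < a + 1 by lra.
have -> : a * (c / (a + 1)) = c - c / (a + 1) by field; rewrite gt_eqF.
have : 0 <= c / (a + 1) by rewrite divr_ge0 // ltW.
lra.
Qed.

Lemma sq_split0 (R : realType) (d r1 r2 : R) :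
  d = r1 + r2 -> r1 ^+ 2 <= d ^+ 2 / 16%:R -> r2 ^+ 2 <= d ^+ 2 / 16%:R -> d = 0.
Proof.
move=> hd h1 h2.
have h3 : 0 <= (r1 - r2) ^+ 2 := sqr_ge0 _.
have h4 : d ^+ 2 <= 0.
  have E : d ^+ 2 = 2 * (r1 ^+ 2 + r2 ^+ 2) - (r1 - r2) ^+ 2 by rewrite hd; ring.
  have E2 : d ^+ 2 / 16%:R * 16%:R = d ^+ 2 by field.
  nra.
have : d ^+ 2 = 0 by apply/le_anti; rewrite h4 sqr_ge0.
by move/eqP; rewrite sqrf_eq0 => /eqP.
Qed.

Section Op.
Variables (R : realType) (H : lmodType R[i]) (ip : H -> H -> R[i]).
Hypothesis hip : is_inner_product ip.
Local Notation n2 := (n2 ip).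
Variables (D : H -> Prop) (A : H -> H).
Hypothesis hA : self_adjoint ip D A.

Definition conv (u : nat -> H) (l : H) :=
  forall eps : R, 0 < eps -> exists N, forall n, (N <= n)%N -> n2 (u n - l) < eps.

Lemma D0 : D 0. Proof. by case: hA => -[]. Qed.
Lemma DDZ a x y : D x -> D y -> D (a *: x + y). Proof. by case: hA => -[] _ h _ _ _ _; apply: h. Qed.
Lemma ADZ a x y : D x -> D y -> A (a *: x + y) = a *: A x + A y.
Proof. by case: hA => -[] _ _ h _ _ _; apply: h. Qed.
Lemma A0 : A 0 = 0.
Proof.
have := ADZ 1 D0 D0; rewrite scaler0 addr0 scale1r.
by rewrite -{1}[A 0]addr0 => /addrI /esym.
Qed.
Lemma DZ a x : D x -> D (a *: x).
Proof. by move=> hx; rewrite -[a *: x]addr0; apply: DDZ => //; exact: D0. Qed.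
Lemma AZ a x : D x -> A (a *: x) = a *: A x.
Proof. by move=> hx; rewrite -[a *: x]addr0 ADZ ?A0 ?addr0 //; exact: D0. Qed.
Lemma DD x y : D x -> D y -> D (x + y).
Proof. by move=> hx hy; rewrite -[x]scale1r; apply: DDZ. Qed.
Lemma AD x y : D x -> D y -> A (x + y) = A x + A y.
Proof. by move=> hx hy; rewrite -[x]scale1r ADZ // !scale1r. Qed.
Lemma DN x : D x -> D (- x).
Proof. by move=> hx; rewrite -scaleN1r; apply: DZ. Qed.
Lemma AN x : D x -> A (- x) = - A x.
Proof. by move=> hx; rewrite -scaleN1r AZ // scaleN1r. Qed.
Lemma DB x y : D x -> D y -> D (x - y).
Proof. by move=> hx hy; apply: DD => //; apply: DN. Qed.
Lemma AB x y : D x -> D y -> A (x - y) = A x - A y.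
Proof. by move=> hx hy; rewrite AD ?AN //; apply: DN. Qed.
Lemma Asym x y : D x -> D y -> ip (A x) y = ip x (A y).
Proof. by case: hA => _ _ _ h; apply: h. Qed.
Lemma Dchar y : (exists z, forall x, D x -> ip (A x) y = ip x z) -> D y.
Proof. by case: hA => _ _ h _; move=> hz; apply/(proj2 (h y)). Qed.

Lemma orth_dense w : (forall y, D y -> ip y w = 0) -> w = 0.
Proof.
move=> h; apply: (n2_eq0 hip); apply/eqP; rewrite eq_le (n2_ge0 hip) andbT.
rewrite leNgt; apply/negP => hw.
have hd : dense ip D by case: hA.
have [y [hy1 hy2]] := dense2 hip hd w hw.
have := re_ip_amgm hip (w - y) w ltr01.
rewrite (ipBl hip) (h y hy1) subr0 mul1r divr1 -/(n2 w).
lra.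
Qed.

Lemma re_ip_small u v (c : R) : 0 <= c -> n2 v <= c / (n2 u + 1) -> re (ip u v) ^+ 2 <= c.
Proof.
move=> hc hv; apply: le_trans (re_ip_CS hip u v) _.
apply: le_trans (small_mul (n2_ge0 hip u) hc).
by rewrite ler_wpM2l // (n2_ge0 hip).
Qed.

Lemma A_closed (xs : nat -> H) x z :
  (forall k, D (xs k)) -> conv xs x -> conv (fun k => A (xs k)) z -> D x /\ A x = z.
Proof.
move=> hD hx hz.
have hre : forall w, D w -> re (ip (A w) x) = re (ip w z).
  move=> w hw; apply/eqP; rewrite -subr_eq0; apply/eqP.
  set d := _ - _.
  have [d0|dn0] := eqVneq d 0; first by [].
  have hd2 : 0 < d ^+ 2 / 16%:R by rewrite divr_gt0 // lt0r sqrf_eq0 dn0 sqr_ge0.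
  have [N1 hN1] := hx _ (divr_gt0 hd2 (ltr_wpDl (n2_ge0 hip (A w)) ltr01)).
  have [N2 hN2] := hz _ (divr_gt0 hd2 (ltr_wpDl (n2_ge0 hip w) ltr01)).
  pose k := maxn N1 N2.
  have hk1 := hN1 k (leq_maxl _ _); have hk2 := hN2 k (leq_maxr _ _).
  apply: (@sq_split0 _ d (re (ip (A w) (x - xs k))) (re (ip w (A (xs k) - z)))).
  - rewrite /d !(ipBr hip) !reB (Asym hw (hD k)); lra.
  - apply: re_ip_small; first exact: ltW.
    by rewrite -opprB (n2N hip) ltW.
  - apply: re_ip_small; first exact: ltW.
    exact: ltW.
have hc : forall w, D w -> ip (A w) x = ip w z.
  move=> w hw; apply: complex_ext; first exact: hre.
  have := hre _ (DZ 'i%C hw).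
  rewrite (AZ _ hw) (re_ipZl hip) (re_ipZl hip) /=; lra.
have hDx : D x by apply: Dchar; exists z.
split => //.
apply/eqP; rewrite -subr_eq0; apply/eqP; apply: orth_dense => y hy.
by rewrite (ipBr hip) -(Asym hy hDx) hc // subrr.
Qed.

End Op.

Lemma choice_seq (T : Type) (P : nat -> T -> Prop) :
  (forall k, exists x, P k x) -> exists f : nat -> T, forall k, P k (f k).
Proof. move=> h; exists (fun k => proj1_sig (cid (h k))) => k; exact: proj2_sig (cid (h k)). Qed.

Definition epsn (R : realType) (k : nat) : R := (k.+1%:R)^-1.

Lemma epsn_gt0 (R : realType) k : 0 < epsn R k.
Proof. by rewrite /epsn invr_gt0 ltr0n. Qed.

Lemma epsn_small (R : realType) (d : R) : 0 < d -> exists N, forall k, (N <= k)%N -> epsn R k < d.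
Proof.
move=> hd; have [N hN] := ltr_add_invr hd; rewrite add0r in hN.
exists N => k hk; apply: le_lt_trans hN.
rewrite /epsn lef_pV2 ?posrE ?ltr0n // ler_nat; by [].
Qed.

Lemma quad0 (R : realType) (N r : R) : 0 <= N -> (forall s, 0 <= s ^+ 2 * N + 2 * s * r) -> r = 0.
Proof.
move=> hN h.
have hN1 : 0 < N + 1 by lra.
set t := r / (N + 1).
have hr : r = t * (N + 1) by rewrite /t divfK // gt_eqF.
have := h (- t); rewrite hr => h2.
have : t ^+ 2 * (N + 2) <= 0 by nra.
move=> h3.
have ht : t ^+ 2 = 0.
  apply/le_anti; rewrite sqr_ge0 andbT.
  have : 0 < N + 2 by lra.
  move=> h4; rewrite -(pmulr_lle0 _ h4); by [].
by move/eqP: ht; rewrite sqrf_eq0 => /eqP ->; rewrite mul0r.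
Qed.

Section N2more.
Variables (R : realType) (H : lmodType R[i]) (ip : H -> H -> R[i]).
Hypothesis hip : is_inner_product ip.
Local Notation n2 := (n2 ip).

Lemma n2_split (v w : H) (e : R) : 0 < e -> n2 (v + w) <= (1 + e) * n2 v + (1 + e^-1) * n2 w.
Proof.
move=> he; rewrite (n2D hip).
have := re_ip_amgm hip v w he; rewrite mulrDl mul1r mulrDl mul1r (mulrC _ (n2 w)); lra.
Qed.

Lemma n2_split2 (v w : H) : n2 (v + w) <= 2 * n2 v + 2 * n2 w.
Proof. have := n2_split v w ltr01; rewrite invr1. lra. Qed.

Lemma n2_lim_le (a : H) (b : R) : 0 <= b ->
  (forall d : R, 0 < d -> exists v, n2 (a - v) < d /\ n2 v < b + d) -> n2 a <= b.
Proof.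
move=> hb h; rewrite leNgt; apply/negP => hab.
set g := n2 a - b.
have hg : 0 < g by rewrite /g subr_gt0.
set eta := g / (4 * (b + 1) + g).
have hden : 0 < 4 * (b + 1) + g by lra.
have heta : 0 < eta by rewrite divr_gt0.
have heta1 : eta * (4 * (b + 1) + g) = g by rewrite /eta divfK // gt_eqF.
have hetab : eta * b <= g / 4%:R.
  have : eta * (4 * (b + 1)) <= g by nra.
  move=> hh; rewrite ler_pdivlMr //; nra.
have heta_le1 : eta <= 1 by rewrite ler_pdivrMr //; lra.
set d := g * eta / (4 * (1 + eta)).
have hd0 : 0 < 4 * (1 + eta) by lra.
have hd : 0 < d by rewrite divr_gt0 // mulr_gt0.
have [v [hv1 hv2]] := h d hd.
have := n2_split v (a - v) heta.
rewrite addrC subrK => hs.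
have E1 : (1 + eta^-1) * d = g / 4%:R.
  rewrite /d; field; rewrite !gt_eqF //; lra.
have E2 : (1 + eta) * d = g * eta / 4%:R.
  rewrite /d; field; rewrite !gt_eqF //; lra.
have hg4 : g * eta / 4%:R <= g / 4%:R.
  by rewrite ler_pM2r ?invr_gt0 ?ltr0n //; rewrite -{2}[g]mulr1 ler_pM2l.
have h1 : (1 + eta) * n2 v < (1 + eta) * (b + d) by rewrite ltr_pM2l //; lra.
have h2 : (1 + eta^-1) * n2 (a - v) <= (1 + eta^-1) * d.
  by rewrite ler_pM2l ?ltW //; rewrite ltr_pwDl // ?invr_ge0 ?ltW.
have h3 : (1 + eta) * (b + d) = b + eta * b + (1 + eta) * d by ring.
rewrite /g in hetab hg4 E1 E2; lra.
Qed.

End N2more.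


Lemma ABsub (V : zmodType) (a b c d : V) : a - b - (c - d) = a - c - (b - d).
Proof. by rewrite !opprB addrACA [RHS]addrACA (addrC (- b)). Qed.
Lemma ABadd (V : zmodType) (a b c d : V) : a + b - (c + d) = a - c + (b - d).
Proof. by rewrite opprD addrACA. Qed.
Lemma grp1 (V : zmodType) (a b c w : V) : a - (w + c) = (a - b - w) + (b - c).
Proof. by rewrite addrA (addrAC (a - b)) subrK opprD addrA. Qed.
Lemma grp2 (V : zmodType) (a b y : V) : (a - y) - (b - y) = a - b.
Proof. by rewrite opprB addrA subrK. Qed.

Section Res.
Local Open Scope classical_set_scope.
Variables (R : realType) (H : lmodType R[i]) (ip : H -> H -> R[i]).
Hypothesis hip : is_inner_product ip.
Hypothesis hcomp : is_complete ip.
Local Notation n2 := (n2 ip).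
Variables (D : H -> Prop) (A : H -> H).
Hypothesis hA : self_adjoint ip D A.

Lemma res_of_bound (l : R[i]) (c : R) : 0 < c ->
  (forall x, D x -> c * n2 x <= n2 (A x - l *: x)) ->
  (forall x, D x -> c * n2 x <= n2 (A x - Num.conj l *: x)) ->
  in_resolvent ip D A l.
Proof.
move=> hc hlb hlb'.
pose T x := A x - l *: x.
have TB : forall x1 x2, D x1 -> D x2 -> T (x1 - x2) = T x1 - T x2.
  move=> x1 x2 h1 h2; rewrite /T (AB hA h1 h2) scalerBr; exact: ABsub.
have TD : forall x1 x2, D x1 -> D x2 -> T (x1 + x2) = T x1 + T x2.
  move=> x1 x2 h1 h2; rewrite /T (AD hA h1 h2) scalerDr; exact: ABadd.
have TZ : forall a x, D x -> T (a *: x) = a *: T x.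
  move=> a x hx; rewrite /T (AZ hA _ hx) scalerBr !scalerA mulrC //.
have hinj : forall x1 x2, D x1 -> D x2 -> T x1 = T x2 -> x1 = x2.
  move=> x1 x2 h1 h2 he; apply/eqP; rewrite -subr_eq0; apply/eqP; apply: (n2_eq0 hip).
  have := hlb _ (DB hA h1 h2); rewrite -/(T _) TB // he subrr (n20 hip) => h.
  apply/le_anti; rewrite (n2_ge0 hip) andbT; by rewrite -(pmulr_rle0 _ hc).
have surj : forall y, exists x, D x /\ T x = y.
  move=> y.
  pose V := [set r : R | exists x, D x /\ r = - n2 (T x - y)].
  have hV0 : V !=set0 by exists (- n2 (T 0 - y)); exists 0; split => //; exact: D0 hA.
  have hVub : ubound V 0 by move=> r [x [_ ->]]; rewrite oppr_le0; exact: n2_ge0.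
  have hV : has_sup V by split => //; exists 0.
  set d := - sup V.
  have hd0 : 0 <= d by rewrite /d oppr_ge0; exact: ge_sup.
  have hlow : forall x, D x -> d <= n2 (T x - y).
    move=> x hx; rewrite /d lerNl; apply: sup_upper_bound => //; by exists x.
  have happ : forall k, exists x, D x /\ n2 (T x - y) < d + epsn R k.
    move=> k; have [r [x [hx ->]] hr] := sup_adherent (epsn_gt0 R k) hV.
    exists x; split => //; rewrite /d; lra.
  have [xs hxs] := choice_seq happ.
  have hD : forall k, D (xs k) by move=> k; case: (hxs k).
  have hxs2 : forall k, n2 (T (xs k) - y) < d + epsn R k by move=> k; case: (hxs k).
  have hpar : forall j k, n2 (T (xs j) - T (xs k)) <= 2 * epsn R j + 2 * epsn R k.
    move=> j k.
    set u := T (xs j) - y; set v := T (xs k) - y.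
    have Euv : T (xs j) - T (xs k) = u - v by rewrite /u /v grp2.
    set m := (2^-1 : R)%:C%C *: (xs j + xs k).
    have hm : D m := DZ hA _ (DD hA (hD j) (hD k)).
    have Eupv : u + v = (2 : R)%:C%C *: (T m - y).
      have hjk : D (xs j + xs k) := DD hA (hD j) (hD k).
      rewrite /m (TZ _ _ hjk) (TD _ _ (hD j) (hD k)) scalerBr scalerA -rmorphM divff ?rmorph1 ?scale1r //; last by rewrite pnatr_eq0.
      rewrite /u /v addrACA; congr (_ + _).
      by rewrite -opprD rmorph_nat scaler_nat mulr2n.
    have h1 := hlow m hm.
    have N4 : n2 (u + v) = 4%:R * n2 (T m - y) by rewrite Eupv (n2Cr hip); congr (_ * _); lra.
    have h2 := n2D hip u v; have h3 := n2B hip u v.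
    have h4 := hxs2 j; have h5 := hxs2 k.
    rewrite Euv; rewrite -/u in h4; rewrite -/v in h5; lra.
  have [x hx] : exists x, conv ip xs x.
    apply: (complete2 hip hcomp) => eps he.
    have [N hN] := epsn_small (d := c * eps / 4%:R) (R := R) (divr_gt0 (mulr_gt0 hc he) (ltr0n _ 4)).
    exists N => j k hj hk.
    have := hlb _ (DB hA (hD j) (hD k)); rewrite -/(T _) TB // => h1.
    have := hpar j k; have := hN j hj; have := hN k hk => h2 h3 h4.
    have : c * n2 (xs j - xs k) < c * eps by lra.
    by rewrite ltr_pM2l.
  have [w hw] : exists w, conv ip (fun k => T (xs k)) w.
    apply: (complete2 hip hcomp) => eps he.
    have [N hN] := epsn_small (d := eps / 4%:R) (R := R) (divr_gt0 he (ltr0n _ 4)).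
    exists N => j k hj hk.
    have := hpar j k; have := hN j hj; have := hN k hk => h2 h3 h4.
    lra.
  have hAx : conv ip (fun k => A (xs k)) (w + l *: x).
    move=> eps he.
    set L := re l ^+ 2 + im l ^+ 2.
    have hL : 0 <= L by rewrite /L addr_ge0 // sqr_ge0.
    have [N1 hN1] := hw (eps / 4%:R) (divr_gt0 he (ltr0n _ 4)).
    have hL4 : 0 < 4%:R * (L + 1) by rewrite mulr_gt0 //; lra.
    have [N2 hN2] := hx (eps / (4%:R * (L + 1))) (divr_gt0 he hL4).
    exists (maxn N1 N2) => k hk.
    rewrite (grp1 _ (l *: xs k)) -/(T _) -scalerBr.
    apply: le_lt_trans (n2_split2 hip _ _) _; rewrite (n2Z hip) -/L.
    have h1 := hN1 k (leq_trans (leq_maxl _ _) hk).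
    have h2 := hN2 k (leq_trans (leq_maxr _ _) hk).
    have h3 : L * n2 (xs k - x) <= L * (eps / (4%:R * (L + 1))).
      by rewrite ler_wpM2l // ltW.
    have h4 : L * (eps / (4%:R * (L + 1))) <= eps / 4%:R.
      have -> : L * (eps / (4%:R * (L + 1))) = L * (eps / 4%:R / (L + 1)).
        by congr (_ * _); rewrite invfM mulrA.
      apply: small_mul => //; exact: divr_ge0 (ltW he) (ler0n _ 4).
    lra.
  have [hDx hAx'] := A_closed hip hA hD hx hAx.
  have hTx : T x = w by rewrite /T hAx' addrK.
  set e := w - y.
  have hmin : n2 e <= d.
    apply: (n2_lim_le hip hd0) => del hdel.
    have [N1 hN1] := hw del hdel.
    have [N2 hN2] := epsn_small (R := R) hdel.
    pose k := maxn N1 N2.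
    exists (T (xs k) - y); split.
      by rewrite /e grp2 -opprB (n2N hip); apply: hN1; exact: leq_maxl.
    apply: lt_le_trans (hxs2 k) _; rewrite lerD2l; apply: ltW; apply: hN2; exact: leq_maxr.
  have hre : forall z, D z -> re (ip e (T z)) = 0.
    move=> z hz; apply: (@quad0 _ (n2 (T z))); first exact: n2_ge0.
    move=> s.
    have hsz := DZ hA (s%:C%C) hz.
    have := hlow _ (DD hA hDx hsz).
    rewrite (TD _ _ hDx hsz) (TZ _ _ hz) hTx.
    rewrite addrAC -/e (n2D hip) (n2Cr hip) (re_ipZr hip) /= mul0r addr0.
    lra.
  have horth : forall z, D z -> ip (T z) e = 0.
    move=> z hz; rewrite ipC //.
    have -> : ip e (T z) = 0.
      apply: complex_ext; first by rewrite hre.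
      have := hre _ (DZ hA 'i%C hz); rewrite TZ // (re_ipZr hip) /=; lra.
    by rewrite rmorph0.
  have hAe : forall z, D z -> ip (A z) e = ip z (Num.conj l *: e).
    move=> z hz.
    have -> : A z = T z + l *: z by rewrite /T subrK.
    by rewrite (ipDl hip) horth // add0r (ipZl hip) (ipZr hip) conjCK.
  have hDe : D e by apply: (Dchar hA); exists (Num.conj l *: e).
  have hz : A e - Num.conj l *: e = 0.
    apply: (orth_dense hip hA) => z hz.
    by rewrite (ipBr hip) -(Asym hA hz hDe) hAe // subrr.
  have := hlb' _ hDe; rewrite hz (n20 hip) => h.
  have he0 : e = 0.
    apply: (n2_eq0 hip); apply/le_anti; rewrite (n2_ge0 hip) andbT.
    by rewrite -(pmulr_rle0 _ hc).
  exists x; split => //; rewrite hTx.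
  by apply/eqP; rewrite -subr_eq0 -/e he0.
pose S y := proj1_sig (cid (surj y)).
have hS : forall y, D (S y) /\ T (S y) = y by move=> y; exact: proj2_sig (cid (surj y)).
exists S; split.
- by move=> y; exact: hS.
- move=> x hx; apply: hinj => //; first by case: (hS (T x)).
  by case: (hS (T x)).
- apply: (bounded_of hip (K := c^-1)); first by rewrite invr_ge0 ltW.
  move=> y; case: (hS y) => h1 h2.
  have := hlb _ h1; rewrite -/(T _) h2 => h.
  by rewrite ler_pdivlMl.
Qed.

End Res.

Section NonReal.
Variables (R : realType) (H : lmodType R[i]) (ip : H -> H -> R[i]).
Hypothesis hip : is_inner_product ip.
Hypothesis hcomp : is_complete ip.
Local Notation n2 := (n2 ip).
Variables (D : H -> Prop) (A : H -> H).
Hypothesis hA : self_adjoint ip D A.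

Lemma im_ipA x : D x -> im (ip (A x) x) = 0.
Proof.
move=> hx; have h := Asym hA hx hx.
have : im (ip (A x) x) = - im (ip (A x) x) by rewrite {1}h (im_ipC hip).
lra.
Qed.

Lemma lb_any (l : R[i]) x : D x -> im l ^+ 2 * n2 x <= n2 (A x - l *: x).
Proof.
move=> hx.
have h0 := n2_ge0 hip (A x - (re l)%:C%C *: x).
rewrite (n2B hip) (n2Cr hip) (re_ipZr hip) /= mul0r addr0 in h0.
rewrite (n2B hip) (n2Z hip) (re_ipZr hip) (im_ipA hx) mulr0 addr0.
lra.
Qed.

Lemma nonreal_res (l : R[i]) : im l != 0 -> in_resolvent ip D A l.
Proof.
move=> hl.
have hc : 0 < im l ^+ 2 by rewrite lt0r sqrf_eq0 hl sqr_ge0.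
apply: (res_of_bound hip hcomp hA hc) => x hx; first exact: lb_any.
by have := lb_any (Num.conj l) hx; rewrite imJ sqrrN.
Qed.

End NonReal.

Section Pos.
Variables (R : realType) (H : lmodType R[i]) (ip : H -> H -> R[i]).
Hypothesis hip : is_inner_product ip.
Local Notation n2 := (n2 ip).

Lemma re_ip_exp (a b c d : H) (s : R) :
  re (ip (a - s%:C%C *: b) (c - s%:C%C *: d)) =
  re (ip a c) - s * re (ip a d) - s * re (ip b c) + s ^+ 2 * re (ip b d).
Proof.
rewrite (ipBl hip) !(ipBr hip) !reB !(re_ipZl hip) !(re_ipZr hip) /=.
rewrite !(im_ipZr hip) /=.
lra.
Qed.

Lemma re_ipCC (r : R) a c : re (ip (r%:C%C *: a) (r%:C%C *: c)) = r ^+ 2 * re (ip a c).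
Proof.
rewrite (re_ipZl hip) (re_ipZr hip) (im_ipZr hip) /=; lra.
Qed.

Lemma posbound (P : H -> H) (K : R) :
  (forall a x y, P (a *: x + y) = a *: P x + P y) ->
  (forall x y, ip (P x) y = ip x (P y)) ->
  (forall x, 0 <= re (ip (P x) x)) ->
  0 <= K -> (forall x, n2 (P x) <= K * n2 x) ->
  forall x, n2 (P x) <= (K + 1) / 2%:R * re (ip (P x) x).
Proof.
move=> hlin hsym hpos hK hb x.
set L := (K + 1) / 2%:R.
have hL : 0 < L by rewrite /L divr_gt0 //; lra.
have hPL : forall y, re (ip (P y) y) <= L * n2 y.
  move=> y; have := re_ip_amgm hip (P y) y ltr01; rewrite mul1r divr1.
  have := hb y; rewrite /L => h1 h2.
  have E : (K + 1) / 2%:R * n2 y * 2%:R = K * n2 y + n2 y by field.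
  nra.
have hPsub : forall s : R, P (x - s%:C%C *: P x) = P x - s%:C%C *: P (P x).
  move=> s; rewrite addrC -scaleNr hlin scaleNr addrC //.
set s := L^-1.
have := hpos (x - s%:C%C *: P x); rewrite hPsub re_ip_exp.
have E1 : re (ip (P (P x)) x) = n2 (P x) by rewrite hsym.
have E2 := hPL (P x).
rewrite E1 -/(n2 (P x)) => h.
have hs : 0 < s by rewrite invr_gt0.
have E3 : s ^+ 2 * re (ip (P (P x)) (P x)) <= s ^+ 2 * (L * n2 (P x)).
  by rewrite ler_wpM2l // sqr_ge0.
have E4 : s ^+ 2 * (L * n2 (P x)) = s * n2 (P x) by rewrite /s; field; rewrite gt_eqF.
have h5 : s * n2 (P x) <= re (ip (P x) x) by lra.
have := h5; rewrite -(ler_pM2l hL) mulrA /s divff ?mul1r //; by rewrite gt_eqF.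
Qed.

End Pos.

Lemma conjR (R : realType) (r : R) : Num.conj (r%:C%C : R[i]) = r%:C%C.
Proof. by apply: complex_ext => //=; rewrite oppr0. Qed.

Lemma lmod_id (R : realType) (V : lmodType R[i]) (q s al : R[i]) (u1 u2 w1 w2 : V) :
  q *: (al *: u1 + u2) - s *: (al *: w1 + w2) = al *: (q *: u1 - s *: w1) + (q *: u2 - s *: w2).
Proof. rewrite !scalerDr !scalerN !scalerA [al * q]mulrC [al * s]mulrC; exact: ABadd. Qed.

Section Key.
Local Open Scope classical_set_scope.
Variables (R : realType) (H : lmodType R[i]) (ip : H -> H -> R[i]).
Hypothesis hip : is_inner_product ip.
Local Notation n2 := (n2 ip).
Variables (D : H -> Prop) (A : H -> H).
Hypothesis hA : self_adjoint ip D A.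
Variable B : H -> H.
Hypothesis hB : self_adjoint ip (fun _ => True) B.
Hypothesis hBb : bounded ip B.
Hypothesis hBpos : nonneg_op ip B.

Lemma BZD a x y : B (a *: x + y) = a *: B x + B y.
Proof. by case: hB => -[] _ _ h _ _ _; apply: h. Qed.
Lemma B0 : B 0 = 0.
Proof. by have := BZD 1 0 0; rewrite scaler0 addr0 scale1r -{1}[B 0]addr0 => /addrI /esym. Qed.
Lemma BZ a x : B (a *: x) = a *: B x.
Proof. by rewrite -[a *: x]addr0 BZD B0 addr0. Qed.
Lemma Bsym x y : ip (B x) y = ip x (B y).
Proof. by case: hB => _ _ _ h; apply: h. Qed.
Lemma b_ge0 x : 0 <= re (ip (B x) x).
Proof. exact: ge0_re (hBpos x). Qed.

Lemma key (a : R) (S : H -> H) :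
  (forall y, D (S y) /\ A (S y) - a%:C%C *: S y = y) ->
  (forall x, D x -> S (A x - a%:C%C *: x) = x) -> bounded ip S ->
  (forall t : R, in_resolvent ip D (fun x => A x + t%:C%C *: B x) a%:C%C) ->
  forall x, re (ip (S (B x)) (B x)) = 0.
Proof.
move=> hS1 hS2 hSb hres.
have [KS [hKS hSK]] := bounded2 hip hSb.
have [KB [hKB hBK]] := bounded2 hip hBb.
have SZD : forall al u v, S (al *: u + v) = al *: S u + S v.
  move=> al u v; case: (hS1 u) => hu1 hu2; case: (hS1 v) => hv1 hv2.
  have E : al *: u + v = A (al *: S u + S v) - a%:C%C *: (al *: S u + S v).
    rewrite (ADZ hA al hu1 hv1) -{1}hu2 -{1}hv2.
    by rewrite scalerBr [in RHS]scalerDr !scalerA [a%:C%C * al]mulrC ABadd.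
  rewrite E hS2 //. exact (DDZ hA al hu1 hv1).
have S0 : S 0 = 0.
  by have := hS2 _ (D0 hA); rewrite (A0 hA) scaler0 subrr.
have SZ : forall al u, S (al *: u) = al *: S u.
  by move=> al u; rewrite -[al *: u]addr0 SZD S0 addr0.
have Ssym : forall u v, ip (S u) v = ip u (S v).
  move=> u v; case: (hS1 u) => hu1 hu2; case: (hS1 v) => hv1 hv2.
  rewrite -{1}hv2 -{2}hu2 (ipBr hip) (ipBl hip) (ipZr hip) (ipZl hip) conjR.
  by rewrite (Asym hA hu1 hv1).
pose g x := re (ip (S (B x)) (B x)).
pose b x := re (ip (B x) x).
move=> x0; apply: contrapT => hg0.
have hg0' : g x0 <> 0 by [].
pose sg : R := if 0 < g x0 then 1 else -1.
have hsg2 : sg ^+ 2 = 1 by rewrite /sg; case: ifP => _; rewrite ?expr1n ?sqrrN ?expr1n.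
have hsgg : 0 < sg * g x0.
  rewrite /sg; case: ifP => h; first by rewrite mul1r.
  rewrite mulN1r oppr_gt0 lt_neqAle; apply/andP; split; first by apply/eqP.
  by rewrite leNgt h.
set LB := (KB + 1) / 2%:R.
have hLB : 0 < LB by rewrite /LB divr_gt0 //; lra.
have hBL : forall x, n2 (B x) <= LB * b x.
  move=> x; apply: (posbound hip) => //; [exact: BZD | exact: Bsym | exact: b_ge0].
have hgb : forall x, sg * g x <= (KS + 1) / 2%:R * LB * b x.
  move=> x.
  have h1 := re_ip_amgm hip (sg%:C%C *: S (B x)) (B x) ltr01.
  rewrite mul1r divr1 (n2Cr hip) hsg2 mul1r (re_ipZl hip) /= mul0r subr0 in h1.
  have h2 := hSK (B x); have h3 := hBL x.
  have h4 : (KS + 1) * n2 (B x) <= (KS + 1) * (LB * b x) by rewrite ler_wpM2l //; lra.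
  have E : (KS + 1) / 2%:R * LB * b x = ((KS + 1) * (LB * b x)) / 2%:R by field.
  rewrite E ler_pdivlMr //; rewrite /g; lra.
have hb0 : forall x, b x = 0 -> g x = 0.
  move=> x hx; have := hBL x; rewrite hx mulr0 => h.
  have : B x = 0 by apply: (n2_eq0 hip); apply/le_anti; rewrite h (n2_ge0 hip).
  by move=> hBx0; rewrite /g hBx0 (ip0r hip).
have hbx0 : 0 < b x0.
  rewrite lt_neqAle b_ge0 andbT; apply/eqP => h; apply: hg0'; apply: hb0; by rewrite h.
set C0 := (KS + 1) / 2%:R * LB.
pose V := [set r : R | exists x, 0 < b x /\ r = sg * g x / b x].
have hV : has_sup V.
  split; first by exists (sg * g x0 / b x0); exists x0.
  exists C0 => r [x [hx ->]]; rewrite ler_pdivrMr //; exact: hgb.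
set q := sup V.
have hq0 : 0 < q.
  apply: lt_le_trans (divr_gt0 hsgg hbx0) _; apply: sup_upper_bound => //; by exists x0.
have hqb : forall x, sg * g x <= q * b x.
  move=> x; have [h|h] := eqVneq (b x) 0; first by rewrite hb0 // h !mulr0.
  have hp : 0 < b x by rewrite lt_neqAle eq_sym h b_ge0.
  rewrite -ler_pdivrMr //; apply: sup_upper_bound => //; by exists x.
pose P x := q%:C%C *: B x - sg%:C%C *: B (S (B x)).
have PZD : forall al x y, P (al *: x + y) = al *: P x + P y.
  by move=> al x y; rewrite /P !BZD SZD BZD lmod_id.
have Psym : forall x y, ip (P x) y = ip x (P y).
  move=> x y; rewrite /P (ipBl hip) (ipBr hip) !(ipZl hip) !(ipZr hip) !conjR.
  by rewrite !Bsym Ssym Bsym.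
have Ppos : forall x, re (ip (P x) x) = q * b x - sg * g x.
  move=> x; rewrite /P (ipBl hip) reB !(re_ipZl hip) /= !mul0r !subr0 (Bsym (S (B x))).
  by rewrite /b /g.
set KP := 2%:R * q ^+ 2 * KB + 2%:R * (KB * (KS * KB)).
have hKP : 0 <= KP.
  have hq2 := sqr_ge0 q; have h1 : 0 <= KS * KB by rewrite mulr_ge0.
  have h2 : 0 <= KB * (KS * KB) by rewrite mulr_ge0.
  have h3 : 0 <= q ^+ 2 * KB by rewrite mulr_ge0.
  rewrite /KP -mulrA; lra.
have hPK : forall x, n2 (P x) <= KP * n2 x.
  move=> x; rewrite /P.
  apply: le_trans (n2_split2 hip _ _) _; rewrite (n2N hip) !(n2Cr hip) hsg2 mul1r.
  have h1 := hBK x; have h2 := hBK (S (B x)); have h3 := hSK (B x).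
  have h4 : KB * n2 (S (B x)) <= KB * (KS * n2 (B x)) by rewrite ler_wpM2l.
  have h5 : KB * (KS * n2 (B x)) <= KB * (KS * (KB * n2 x)).
    by rewrite ler_wpM2l // ler_wpM2l.
  have h6 : q ^+ 2 * n2 (B x) <= q ^+ 2 * (KB * n2 x) by rewrite ler_wpM2l // sqr_ge0.
  have E : KP * n2 x = 2%:R * (q ^+ 2 * (KB * n2 x)) + 2%:R * (KB * (KS * (KB * n2 x))).
    by rewrite /KP; ring.
  rewrite E; lra.
set LP := (KP + 1) / 2%:R.
have hLP : 0 < LP by rewrite /LP divr_gt0 //; lra.
have hPL : forall x, n2 (P x) <= LP * (q * b x - sg * g x).
  move=> x; rewrite -Ppos; apply: (posbound hip) => //.
  by move=> x1; rewrite Ppos subr_ge0.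
pose t := - sg / q.
have [S' [hS'1 hS'2 hS'b]] := hres t.
have [KS' [hKS' hS'K]] := bounded2 hip hS'b.
have hu : forall u, D u -> n2 u <= KS' * n2 (A u + t%:C%C *: B u - a%:C%C *: u).
  by move=> u hu; rewrite -{1}(hS'2 u hu); apply: hS'K.
set X := LB * KS' * LP.
have hX : 0 <= X.
  by rewrite /X; apply: mulr_ge0; [apply: mulr_ge0 => //; exact: ltW | exact: ltW].
set W := 2%:R + 2%:R * X / q ^+ 3.
have hq3 : 0 < q ^+ 3 := exprn_gt0 3 hq0.
have hW : 0 < W.
  have : 0 <= 2%:R * X / q ^+ 3 := divr_ge0 (mulr_ge0 (ler0n _ 2) hX) (ltW hq3).
  rewrite /W; lra.
set eps := q / (2%:R * W).
have heps : 0 < eps by rewrite /eps divr_gt0 // mulr_gt0.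
have [r [x1 [hbx1 ->]] hr] := sup_adherent heps hV.
rewrite -/q in hr.
set rho := (Num.sqrt (b x1))^-1.
have hrho2 : rho ^+ 2 = (b x1)^-1 by rewrite /rho exprVn sqr_sqrtr // ltW.
set x := rho%:C%C *: x1.
have hBx : B x = rho%:C%C *: B x1 by rewrite /x BZ.
have hbx : b x = 1.
  by rewrite /b hBx /x (re_ipCC hip) hrho2 -/(b x1) mulVf // gt_eqF.
have hgx : sg * g x = sg * g x1 / b x1.
  rewrite /g hBx SZ (re_ipCC hip) hrho2 -/(g x1); field; rewrite gt_eqF //.
rewrite -hgx in hr.
set z := B x.
have [hDu hu2] := hS1 z.
set u := S z.
have hz : n2 z <= LB by have := hBL x; rewrite hbx mulr1.
have hsgu : sg * g x = re (ip (sg%:C%C *: u) z) by rewrite (re_ipZl hip) /= mul0r subr0.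
set eta := 2%:R * LB / q.
have heta : 0 < eta by rewrite /eta divr_gt0 // mulr_gt0.
have h1 := re_ip_amgm hip (sg%:C%C *: u) z heta.
rewrite (n2Cr hip) hsg2 mul1r -hsgu in h1.
have h2 : n2 z / eta <= q / 2%:R.
  rewrite /eta ler_pdivrMr // ; have -> : q / 2%:R * (2%:R * LB / q) = LB by field; rewrite gt_eqF.
  exact: hz.
have hPx : A u + t%:C%C *: B u - a%:C%C *: u = (q^-1)%:C%C *: P x.
  rewrite /P -/z -/u scalerBr !scalerA -!rmorphM mulVf ?gt_eqF // rmorph1 scale1r.
  rewrite addrAC hu2 /t mulNr rmorphN scaleNr mulrC //.
have h3 : n2 u <= KS' * (q ^-2 * (LP * eps)).
  apply: le_trans (hu u hDu) _; rewrite hPx (n2Cr hip).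
  rewrite ler_wpM2l //; rewrite exprVn; apply: ler_wpM2l; first by rewrite invr_ge0 exprn_ge0 // ltW.
  apply: le_trans (hPL x) _; rewrite hbx mulr1 ler_wpM2l ?ltW //; lra.
have h4 : eta * n2 u <= eta * (KS' * (q ^-2 * (LP * eps))) by rewrite ler_wpM2l // ltW.
have E1 : eta * (KS' * (q ^-2 * (LP * eps))) = 2%:R * X * eps / q ^+ 3.
  rewrite /eta /X; field; rewrite gt_eqF //.
have E2 : 2%:R * eps + 2%:R * X * eps / q ^+ 3 = q / 2%:R.
  rewrite /eps /W; field.
  have hh : 0 < 2%:R * q ^+ 3 + 2%:R * X by lra.
  by rewrite !gt_eqF.
lra.
Qed.



Hypothesis hcomp : is_complete ip.

Lemma B_zero (a : R) : in_resolvent ip D A a%:C%C ->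
  (forall t a' : R, in_resolvent ip D A a'%:C%C ->
     in_resolvent ip D (fun x => A x + t%:C%C *: B x) a'%:C%C) ->
  forall x, B x = 0.
Proof.
move=> hres0 hall.
have [S [hS1 hS2 hSb]] := hres0.
have [KS [hKS hSK]] := bounded2 hip hSb.
set del := (KS + 1)^-1 / 2%:R.
have hK1 : 0 < KS + 1 by lra.
have hdel : 0 < del by rewrite /del divr_gt0 // invr_gt0.
have hdelE : del * (KS + 1) = 2%:R^-1 by rewrite /del; field; rewrite gt_eqF.
have hdel2 : KS * del ^+ 2 <= 4%:R^-1.
  have E : (del * (KS + 1)) ^+ 2 = 4%:R^-1 by rewrite hdelE; field.
  have h1 : 0 <= del ^+ 2 := sqr_ge0 _.
  have h2 : KS <= (KS + 1) ^+ 2 by nra.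
  have h3 : KS * del ^+ 2 <= (KS + 1) ^+ 2 * del ^+ 2 by rewrite ler_wpM2r.
  have E' : (KS + 1) ^+ 2 * del ^+ 2 = 4%:R^-1 by rewrite -E; ring.
  lra.
set a' := a + del.
have hlb : forall x, D x -> (4%:R * (KS + 1))^-1 * n2 x <= n2 (A x - a'%:C%C *: x).
  move=> x hx.
  have h1 : n2 x <= KS * n2 (A x - a%:C%C *: x) by rewrite -{1}(hS2 x hx); apply: hSK.
  have E : A x - a%:C%C *: x = (A x - a'%:C%C *: x) + del%:C%C *: x.
    by rewrite /a' rmorphD scalerDl opprD addrA subrK.
  set Y := n2 (A x - a'%:C%C *: x).
  have h2 : n2 (A x - a%:C%C *: x) <= 2%:R * Y + 2%:R * (del ^+ 2 * n2 x).
    by rewrite E; apply: le_trans (n2_split2 hip _ _) _; rewrite (n2Cr hip).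
  have h3 : KS * n2 (A x - a%:C%C *: x) <= KS * (2%:R * Y + 2%:R * (del ^+ 2 * n2 x)).
    by rewrite ler_wpM2l.
  have h4 : KS * del ^+ 2 * n2 x <= 4%:R^-1 * n2 x by rewrite ler_wpM2r // (n2_ge0 hip).
  have E2 : KS * (2%:R * Y + 2%:R * (del ^+ 2 * n2 x)) = 2%:R * (KS * Y) + 2%:R * (KS * del ^+ 2 * n2 x) by ring.
  have hY : 0 <= Y := n2_ge0 hip _.
  have h5 : KS * Y <= (KS + 1) * Y by rewrite ler_wpM2r //; lra.
  have E3 : 4%:R^-1 * n2 x * 4%:R = n2 x by field.
  have h6 : n2 x <= 4%:R * ((KS + 1) * Y) by lra.
  rewrite ler_pdivrMl ?mulr_gt0 //; by rewrite mulrA in h6.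
have hc : 0 < (4%:R * (KS + 1))^-1 by rewrite invr_gt0 mulr_gt0.
have hres' : in_resolvent ip D A a'%:C%C.
  apply: (res_of_bound hip hcomp hA hc) => x hx; first exact: hlb.
  by rewrite conjR; exact: hlb.
have [S' [hS'1 hS'2 hS'b]] := hres'.
have [KS' [hKS' hS'K]] := bounded2 hip hS'b.
have hk := key hS1 hS2 hSb (fun t => hall t a hres0).
have hk' := key hS'1 hS'2 hS'b (fun t => hall t a' hres').
move=> x.
have [hDv hv] := hS1 (B x); have [hDv' hv'] := hS'1 (B x).
set v := S (B x) in hDv hv hk; set v' := S' (B x) in hDv' hv' hk'.
have r1 := hk x; have r2 := hk' x.
rewrite -/v in r1; rewrite -/v' in r2.
have hAv' : A v' = B x + del%:C%C *: v' + a%:C%C *: v'.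
  by rewrite -hv' /a' rmorphD scalerDl opprD addrA subrK subrK.
have E : ip v' (B x) = ip (B x) v + del%:C%C * ip v' v.
  rewrite -{1}hv (ipBr hip) (ipZr hip) conjR -(Asym hA hDv' hDv) hAv'.
  rewrite !(ipDl hip) !(ipZl hip); ring.
have Er : re (ip v' (B x)) = re (ip (B x) v) + del * re (ip v' v).
  by rewrite E reD reM /= mul0r subr0.
have hvv : re (ip v' v) = 0.
  rewrite r2 (re_ipC hip) r1 add0r in Er.
  by move/esym/eqP: Er; rewrite mulf_eq0 gt_eqF //= => /eqP.
have hdiff : v - v' = S ((- del)%:C%C *: v').
  rewrite -(hS2 (v - v') (DB hA hDv hDv')).
  congr (S _).
  rewrite (AB hA hDv hDv') scalerBr ABsub hv.
  have -> : A v' - a%:C%C *: v' = B x + del%:C%C *: v' by rewrite hAv' addrK.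
  by rewrite opprD addrA subrr add0r rmorphN scaleNr.
have hn : n2 (v' - v) <= KS * (del ^+ 2 * n2 v').
  rewrite -opprB (n2N hip) hdiff; apply: le_trans (hSK _) _; rewrite (n2Cr hip) sqrrN //.
have hh : 0 < 2%:R^-1 :> R by rewrite invr_gt0.
have ham := re_ip_amgm hip v' (v' - v) hh.
rewrite (ipBr hip) reB -/(n2 v') hvv subr0 invrK in ham.
have h7 : KS * (del ^+ 2 * n2 v') <= 4%:R^-1 * n2 v'.
  by rewrite mulrA ler_wpM2r // (n2_ge0 hip).
have h8 : n2 v' <= 0 by lra.
have hv0 : v' = 0.
  by apply: (n2_eq0 hip); apply/le_anti; rewrite h8 (n2_ge0 hip).
by rewrite -hv' hv0 (A0 hA) scaler0 subr0.
Qed.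

End Key.

Unset Implicit Arguments.

Theorem corollary1p2 (R : realType) (H : lmodType R[i]) (ip : H -> H -> R[i])
  (hH : is_hilbert ip)
  (DA : H -> Prop) (A B : H -> H)
  (hA : self_adjoint ip DA A)
  (hB : self_adjoint ip (fun _ => True) B)
  (hBb : bounded ip B)
  (hBpos : nonneg_op ip B)
  (hspec : forall t : R[i], t \is Num.real -> forall l : R[i],
      in_spectrum ip DA (fun x => A x + t *: B x) l <-> in_spectrum ip DA A l) :
  (forall x : H, B x = 0) \/
  (forall l : R[i], in_spectrum ip DA A l <-> l \is Num.real).
Proof.
case: hH => hip hcomp.
have [hz|hnz] := EM (forall x : H, B x = 0); first by left.
right => l.
have hall : forall t a' : R, in_resolvent ip DA A a'%:C%C ->
     in_resolvent ip DA (fun x => A x + t%:C%C *: B x) a'%:C%C.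
  move=> t a' hr; apply: contrapT => hn.
  have hreal : (t%:C%C : R[i]) \is Num.real by rewrite complex_real.
  by have := (proj1 (hspec _ hreal a'%:C%C)) hn.
case: l => lr li.
rewrite complex_real.
have [hli|hli] := eqVneq li 0.
  rewrite hli; split => // _ hres.
  apply: hnz; exact: (B_zero hip hA hB hBb hBpos hcomp hres hall).
split => [hsp|h0]; last by [].
exfalso; apply: hsp.
by apply: (nonreal_res hip hcomp hA) => /=.
Qed.
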